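(* For every $n\ge 1$, the sensitivity to synchronism of elementary cellular automaton rule $200$ satisfies $\mu(f_{200,n})=\dfrac{1}{3^n-2^{n+1}+2}$.
   Context: Cells are indexed by $\mathbb{Z}_n=\{0,\dots,n-1\}$, indices modulo $n$. Rule $200$ has local rule $r_{200}(x_1,x_2,x_3)=x_2\wedge(x_1\vee x_3)$, and global function $f_{200,n}(x)_i=r_{200}(x_{i-1},x_i,x_{i+1})$. An update schedule is an ordered partition $\Delta=(\Delta_1,\dots,\Delta_k)$ of $\mathbb{Z}_n$ into nonempty blocks; $\mathcal{P}_n$ is the set of them. For a block $B$ let $f^{(B)}(x)_i=f_{200,n}(x)_i$ if $i\in B$ and $x_i$ otherwise; $f^{(\Delta)}_{200,n}=f^{(\Delta_k)}\circ\cdots\circ f^{(\Delta_1)}$. The dynamics of $\Delta$ is the transition digraph with arcs $(x,f^{(\Delta)}_{200,n}(x))$; $\mathcal{D}(f_{200,n})$ is the set of distinct dynamics over $\Delta\in\mathcal{P}_n$ (equivalently, the number of distinct maps $f^{(\Delta)}_{200,n}$). The sensitivity to synchronism is $\mu(f_{200,n})=|\mathcal{D}(f_{200,n})|/(3^n-2^{n+1}+2)$. *)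

(* Defs.v *)
From mathcomp Require Import all_boot all_order all_algebra.
Set Implicit Arguments. Unset Strict Implicit. Unset Printing Implicit Defensive.

Definition config (n : nat) := {ffun 'I_n -> bool}.

Lemma ord_pos n (i : 'I_n) : 0 < n.
Proof. exact: leq_ltn_trans (leq0n i) (ltn_ord i). Qed.

(* i - 1 and i + 1 modulo n *)
Definition cell_prev n (i : 'I_n) : 'I_n :=
  Ordinal (ltn_pmod (i + n.-1) (ord_pos i)).
Definition cell_next n (i : 'I_n) : 'I_n :=
  Ordinal (ltn_pmod (i.+1) (ord_pos i)).

Definition r200 (x1 x2 x3 : bool) : bool := x2 && (x1 || x3).

Definition f200 n (x : config n) : config n :=
  [ffun i => r200 (x (cell_prev i)) (x i) (x (cell_next i))].

Definition block_update n (B : {set 'I_n}) (x : config n) : config n :=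
  [ffun i => if i \in B then f200 x i else x i].

(* An ordered partition (Delta_1,...,Delta_k) of 'I_n into nonempty blocks is
   encoded by the labelling lab : 'I_n -> 'I_n, lab i = (index of the block
   containing i) - 1; validity = the set of used labels is {0,...,k-1}
   (an initial segment), so that every block is nonempty.
   This is a bijection with ordered partitions. *)
Definition schedule (n : nat) := {ffun 'I_n -> 'I_n}.

Definition is_ordered_partition n (lab : schedule n) : bool :=
  [forall i, forall j : 'I_n, (j < lab i)%N ==> [exists i', lab i' == j]].

Definition block n (lab : schedule n) (j : 'I_n) : {set 'I_n} :=
  [set i | lab i == j].

(* f^(Delta) = f^(Delta_k) o ... o f^(Delta_1); blocks applied in increasing
   label order (labels beyond k-1 give empty blocks, i.e. the identity). *)
Definition f_sched n (lab : schedule n) (x : config n) : config n :=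
  foldl (fun y j => block_update (block lab j) y) x (enum 'I_n).

Definition f_sched_ffun n (lab : schedule n) : {ffun config n -> config n} :=
  [ffun x => f_sched lab x].

Definition dynamics200 n : {set {ffun config n -> config n}} :=
  [set f_sched_ffun lab | lab in [pred l : schedule n | is_ordered_partition l]].

Definition mu200 (n : nat) : rat :=
  (#|dynamics200 n|%:R / ((3 ^ n)%:R - (2 ^ n.+1)%:R + 2))%R.

(* Main.v *)
Require Import Defs.
From mathcomp Require Import all_boot all_order all_algebra.

Lemma prev_next n (i : 'I_n) : cell_prev (cell_next i) = i.
Proof.
have n0 := ord_pos i.
apply: val_inj => /=; rewrite modnDml.
have -> : i.+1 + n.-1 = i + n by rewrite -addn1 -addnA add1n prednK.
by rewrite modnDr modn_small.
Qed.

Lemma next_prev n (i : 'I_n) : cell_next (cell_prev i) = i.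
Proof.
have n0 := ord_pos i.
apply: val_inj => /=; rewrite -addn1 modnDml -addnA addn1 prednK //.
by rewrite modnDr modn_small.
Qed.

Lemma f_stable n (x y : config n) :
  (forall i, f200 x i ==> y i) -> (forall i, y i ==> x i) -> f200 y = f200 x.
Proof.
move=> H1 H2; apply/ffunP => i.
move: (H1 i) (H2 i) (H1 (cell_prev i)) (H2 (cell_prev i))
      (H1 (cell_next i)) (H2 (cell_next i)).
rewrite !ffunE /r200 next_prev prev_next.
case: (x (cell_prev (cell_prev i))); case: (x (cell_next (cell_next i)));
case: (x i); case: (y i); case: (x (cell_prev i)); case: (y (cell_prev i));
by case: (x (cell_next i)); case: (y (cell_next i)).
Qed.

Lemma fold_lem n (lab : schedule n) (x : config n) (s : seq 'I_n) :
  forall y : config n,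
  (forall i, f200 x i ==> y i) -> (forall i, y i ==> x i) ->
  forall i, (lab i \in s) || (y i == f200 x i) ->
  foldl (fun y j => block_update (block lab j) y) y s i = f200 x i.
Proof.
elim: s => [|a s IH] y H1 H2 i /=.
  by move/eqP.
have Hf := @f_stable _ _ _ H1 H2.
set y' := block_update _ y.
have Ey j : y' j = if lab j == a then f200 x j else y j.
  by rewrite /y' /block_update ffunE inE Hf.
move=> Hi; apply: IH.
- by move=> j; rewrite Ey; case: (lab j == a); [exact: implybb | exact: H1].
- move=> j; rewrite Ey; case: (lab j == a); last exact: H2.
  by rewrite ffunE /r200; apply/implyP => /andP[].
move: Hi; rewrite in_cons Ey.
case: (lab i == a) => /=; first by rewrite eqxx orbT.
by [].
Qed.

Lemma f_sched_eq n (lab : schedule n) (x : config n) : f_sched lab x = f200 x.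
Proof.
apply/ffunP => i; rewrite /f_sched; apply: fold_lem.
- by move=> j; rewrite ffunE /r200; apply/implyP => /andP[].
- by move=> j; case: (x j).
by rewrite mem_enum.
Qed.

Theorem mainTheorem2 (n : nat) (hn : (1 <= n)%N) :
  mu200 n = (1 / ((3 ^ n)%:R - (2 ^ n.+1)%:R + 2))%R.
Proof.
have Hd : dynamics200 n = [set [ffun x => f200 x]].
  apply/setP => g; rewrite inE; apply/imsetP/eqP.
  - move=> [lab _ ->]; apply/ffunP => x; by rewrite !ffunE f_sched_eq.
  - move=> ->.
    pose i0 : 'I_n := Ordinal hn.
    exists [ffun => i0].
      rewrite inE; apply/forallP => i; apply/forallP => j.
      by rewrite ffunE /i0 /=.
    by apply/ffunP => x; rewrite !ffunE f_sched_eq.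
by rewrite /mu200 Hd cards1 GRing.mulr1n.
Qed.
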